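(* Let $\nu>0$, $v_0>0$ and $w_0\in\mathbb{R}\setminus\{0\}$, and define for $t\ge0$ $$\omega_{-1}(t)=\frac{w_0e^{\nu t}}{\left(1-\frac{w_0}{1+v_0}t+\frac{e^{\nu t}-1}{2}(1+v_0)\right)^2},\qquad v_c(t)=\frac{-1+\frac{w_0}{1+v_0}t+\frac{e^{\nu t}+1}{2}(1+v_0)}{1-\frac{w_0}{1+v_0}t+\frac{e^{\nu t}-1}{2}(1+v_0)},$$ which solves $\frac{d\omega_{-1}}{dt}=-\nu v_c\omega_{-1}+\frac{2\omega_{-1}^2}{1+v_c}$, $\frac{dv_c}{dt}=\omega_{-1}+\frac{\nu}{2}(1-v_c^2)$ with $v_c(0)=v_0$, $\omega_{-1}(0)=w_0$. Let $\omega(x,0)=\omega_-(x,0)+\overline{\omega_-(\bar x,0)}$ with $\omega_-(x,0)=w_0\left[\frac{1}{\tan(x/2)-\mathrm{i}v_0}-\frac{1}{-\mathrm{i}-\mathrm{i}v_0}\right]$. Suppose collapse occurs, i.e. there is a finite $t_c>0$ such that $v_c(t)\in(0,\infty)$ for $t\in[0,t_c)$ and either $v_c(t)\to0$ or $v_c(t)\to+\infty$ as $t\to t_c^-$. Then $$\|\omega(\cdot,0)\|_{B_0}\ge2e\nu\quad\text{and}\quad \|\omega(\cdot,0)\|_{L^2}\ge\frac{2\sqrt{\pi}\,\nu}{\sqrt{M}},\qquad M=\max_{s\ge0}\left(e^{-2s}-(1-s)^2\right)$$ (so $\|\omega(\cdot,0)\|_{L^2}\gtrsim 8.81\,\nu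$).
   Context: This is the single complex-conjugate pole-pair solution of the generalized Constantin–Lax–Majda equation with $a=0$, $\sigma=1$, zero mean ($\omega_{av}=0$) and real data, on the circle. Norms: $\|f\|_{L^2}^2=\int_{-\pi}^{\pi}|f|^2dx$ and $\|f\|_{B_0}=\sum_{k\in\mathbb{Z}}|\hat f_k|$ with $\hat f_k=\frac{1}{2\pi}\int_{-\pi}^{\pi}f(x)e^{-\mathrm{i}kx}dx$; explicitly $\|\omega(\cdot,0)\|_{L^2}^2=\frac{4\pi w_0^2}{v_0(1+v_0)^2}$ and $\|\omega(\cdot,0)\|_{B_0}=\frac{|w_0|}{v_0}\left(\left|\frac{1-v_0}{1+v_0}\right|+1\right)$. *)

(* Defs.v *)
From Stdlib Require Import Reals.
From Coquelicot Require Import Coquelicot.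
Open Scope R_scope.

Definition clm_den (nu v0 w0 t : R) : R :=
  1 - w0 / (1 + v0) * t + (exp (nu * t) - 1) / 2 * (1 + v0).

Definition omega_m1 (nu v0 w0 t : R) : R :=
  w0 * exp (nu * t) / (clm_den nu v0 w0 t) ^ 2.

Definition v_c (nu v0 w0 t : R) : R :=
  (-1 + w0 / (1 + v0) * t + (exp (nu * t) + 1) / 2 * (1 + v0))
  / clm_den nu v0 w0 t.

(* Norms of the initial datum omega(.,0), via the explicit formulas
   given in the context:
   ||omega(.,0)||_{L^2}^2 = 4 pi w0^2 / (v0 (1+v0)^2),
   ||omega(.,0)||_{B_0}   = |w0|/v0 (|(1-v0)/(1+v0)| + 1). *)
Definition L2norm_omega0 (v0 w0 : R) : R :=
  sqrt (4 * PI * w0 ^ 2 / (v0 * (1 + v0) ^ 2)).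

Definition B0norm_omega0 (v0 w0 : R) : R :=
  Rabs w0 / v0 * (Rabs ((1 - v0) / (1 + v0)) + 1).

Definition M_fun (s : R) : R := exp (-2 * s) - (1 - s) ^ 2.

Definition collapses (nu v0 w0 : R) : Prop :=
  exists tc : R, 0 < tc /\
    (forall t, 0 <= t < tc -> 0 < v_c nu v0 w0 t) /\
    (filterlim (v_c nu v0 w0) (at_left tc) (locally 0)
     \/ filterlim (v_c nu v0 w0) (at_left tc) (Rbar_locally p_infty)).

(* Main.v *)
Require Import Defs.
From Stdlib Require Import Reals Lra Psatz.
From Coquelicot Require Import Coquelicot.
Open Scope R_scope.

Definition qf (x : R) := (x - 1) * exp (2 * x) + 1.
Definition dqf (x : R) := (2 * x - 1) * exp (2 * x).

Lemma qf_der x : derivable_pt_lim qf x (dqf x).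
Proof.
  apply is_derive_Reals. unfold qf, dqf. auto_derive; auto. ring.
Qed.

Lemma qf_neg_small c : 0 < c <= 1/2 -> qf c < 0.
Proof.
  intros Hc. destruct (MVT_cor2 qf dqf 0 c) as [d [Hd1 Hd2]]; try lra.
  intros; apply qf_der.
  assert (qf 0 = 0) by (unfold qf; rewrite Rmult_0_r, exp_0; ring).
  unfold dqf in Hd1. pose proof (exp_pos (2*d)).
  assert ((2*d-1)*exp(2*d) < 0) by (apply Rmult_neg_pos; lra).
  nra.
Qed.

Lemma qf_u_half u : 0 < u -> qf u = 0 -> 1/2 < u.
Proof.
  intros Hu Hq. destruct (Rlt_le_dec (1/2) u); auto.
  pose proof (qf_neg_small u). lra.
Qed.

Lemma qf_neg u c : 0 < c < u -> qf u = 0 -> qf c < 0.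
Proof.
  intros Hc Hq. pose proof (qf_u_half u ltac:(lra) Hq).
  destruct (Rle_lt_dec c (1/2)). apply qf_neg_small; lra.
  destruct (MVT_cor2 qf dqf c u) as [d [Hd1 Hd2]]; try lra.
  intros; apply qf_der.
  unfold dqf in Hd1. pose proof (exp_pos (2*d)).
  assert (0 < (2*d-1)*exp(2*d)) by (apply Rmult_lt_0_compat; lra).
  nra.
Qed.

Lemma qf_pos u c : 0 < u < c -> qf u = 0 -> 0 < qf c.
Proof.
  intros Hc Hq. pose proof (qf_u_half u ltac:(lra) Hq).
  destruct (MVT_cor2 qf dqf u c) as [d [Hd1 Hd2]]; try lra.
  intros; apply qf_der.
  unfold dqf in Hd1. pose proof (exp_pos (2*d)).
  assert (0 < (2*d-1)*exp(2*d)) by (apply Rmult_lt_0_compat; lra).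
  nra.
Qed.

Definition rf (x : R) := (exp (2 * x) - 1) / x ^ 2.
Definition drf (x : R) := 2 * qf x / x ^ 3.

Lemma rf_der x : 0 < x -> derivable_pt_lim rf x (drf x).
Proof.
  intros Hx. apply is_derive_Reals. unfold rf, drf, qf. auto_derive.
  - nra.
  - field. lra.
Qed.

Lemma rf_min u s : 0 < u -> qf u = 0 -> 0 < s -> rf u <= rf s.
Proof.
  intros Hu Hq Hs. destruct (Rtotal_order s u) as [H|[H|H]].
  - destruct (MVT_cor2 rf drf s u) as [d [Hd1 Hd2]]; try lra.
    intros; apply rf_der; lra.
    pose proof (qf_neg u d ltac:(lra) Hq).
    assert (drf d < 0). { unfold drf, Rdiv. apply Rmult_neg_pos. lra.
      apply Rinv_0_lt_compat, pow_lt; lra. }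
    nra.
  - subst; lra.
  - destruct (MVT_cor2 rf drf u s) as [d [Hd1 Hd2]]; try lra.
    intros; apply rf_der; lra.
    pose proof (qf_pos u d ltac:(lra) Hq).
    assert (0 < drf d). { unfold drf, Rdiv. apply Rmult_lt_0_compat. lra.
      apply Rinv_0_lt_compat, pow_lt; lra. }
    nra.
Qed.

Lemma key M : (forall s, 0 <= s -> M_fun s <= M) ->
  (exists s, 0 <= s /\ M_fun s = M) ->
  0 < M /\ forall s, 0 < s -> s ^ 2 <= M * (exp (2 * s) - 1).
Proof.
  intros Hmax [u [Hu0 HuM]].
  assert (HM : 0 < M).
  { pose proof (Hmax (1/2) ltac:(lra)). unfold M_fun in H.
    assert (E1 : exp (-2 * (1/2)) = / exp 1) by (rewrite <- exp_Ropp; f_equal; field).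
    pose proof exp_le_3. rewrite E1 in H.
    assert (/ exp 1 >= 1/3). { apply Rle_ge. unfold Rdiv. rewrite Rmult_1_l.
      apply Rinv_le_contravar; [apply exp_pos | lra]. }
    nra. }
  assert (Hu : 0 < u).
  { destruct Hu0 as [H|H]; auto. subst. unfold M_fun in HM.
    rewrite Rmult_0_r, exp_0 in HM. lra. }
  assert (Hd : derivable_pt_lim M_fun u (-2 * exp (-2 * u) + 2 * (1 - u))).
  { apply is_derive_Reals. unfold M_fun. auto_derive; auto. ring. }
  assert (Hpr : derivable_pt M_fun u) by (exists (-2 * exp (-2 * u) + 2 * (1 - u)); exact Hd).
  pose proof (deriv_maximum M_fun 0 (u+1) u Hpr Hu ltac:(lra)) as H0.
  rewrite (derive_pt_eq_0 _ _ _ Hpr Hd) in H0.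
  assert (Hex : exp (-2 * u) = 1 - u). { assert (-2 * exp (-2 * u) + 2 * (1 - u) = 0) by (apply H0; intros; rewrite HuM; apply Hmax; lra). lra. }
  assert (Hee : exp (2 * u) * exp (-2 * u) = 1).
  { rewrite <- exp_plus. replace (2*u + -2*u) with 0 by ring. apply exp_0. }
  assert (Hq : qf u = 0). { unfold qf. rewrite Hex in Hee. nra. }
  assert (HMu : M = u * (1 - u)). { rewrite <- HuM. unfold M_fun. rewrite Hex. ring. }
  split; auto.
  intros s Hs. pose proof (rf_min u s Hu Hq Hs). unfold rf in H.
  assert (Hr : M * ((exp (2 * u) - 1) / u ^ 2) = 1).
  { rewrite HMu. assert (Hw : (1 - u) * exp (2 * u) = 1) by (rewrite Hex in Hee; lra).
    replace (u*(1-u)*((exp(2*u)-1)/u^2)) with (((1-u)*exp(2*u) - (1-u))/u) by (field; lra).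
    rewrite Hw. field. lra. }
  assert (1 <= M * ((exp (2 * s) - 1) / s ^ 2)) by (apply Rle_trans with (M * ((exp (2*u)-1)/u^2)); [lra | apply Rmult_le_compat_l; lra]).
  assert (0 < s^2) by (apply pow_lt; lra).
  unfold Rdiv in H1. rewrite <- Rmult_assoc in H1.
  apply (Rmult_le_compat_r (s^2)) in H1; [|lra].
  rewrite Rmult_assoc, Rinv_l in H1; lra.
Qed.
Lemma B0gen nu v0 w0 s E K : 0 < nu -> 0 < v0 -> 0 < s -> exp 1 * s <= E ->
  Rabs w0 * s = nu * (1 + v0) * K -> (1 <= v0 -> E <= K) -> (v0 < 1 -> v0 * E <= K) ->
  B0norm_omega0 v0 w0 >= 2 * exp 1 * nu.
Proof.
  intros Hnu Hv Hs HE HX H1 H2. unfold B0norm_omega0.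
  assert (HXe : Rabs w0 = nu * (1 + v0) * K / s) by (rewrite <- HX; field; lra).
  rewrite HXe. pose proof (exp_pos 1).
  destruct (Rle_lt_dec 1 v0) as [Hv1|Hv1].
  - rewrite Rabs_left1.
    2:{ unfold Rdiv. apply Rmult_le_0_r; [lra|]. left; apply Rinv_0_lt_compat; lra. }
    replace (nu * (1 + v0) * K / s / v0 * (- ((1 - v0) / (1 + v0)) + 1)) with (2 * nu * (K / s)) by (field; lra).
    specialize (H1 Hv1). assert (exp 1 <= K / s).
    { apply Rmult_le_reg_r with s; auto. unfold Rdiv. rewrite Rmult_assoc, Rinv_l; lra. }
    nra.
  - rewrite Rabs_pos_eq.
    2:{ unfold Rdiv. apply Rmult_le_pos; [lra|]. left; apply Rinv_0_lt_compat; lra. }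
    replace (nu * (1 + v0) * K / s / v0 * ((1 - v0) / (1 + v0) + 1)) with (2 * nu * (K / (s * v0))) by (field; lra).
    specialize (H2 Hv1). assert (exp 1 <= K / (s * v0)).
    { apply Rmult_le_reg_r with (s * v0). nra. unfold Rdiv. rewrite Rmult_assoc, Rinv_l; nra. }
    nra.
Qed.

Lemma L2gen nu v0 w0 s E K M : 0 < nu -> 0 < v0 -> 0 < s -> 0 < M ->
  Rabs w0 * s = nu * (1 + v0) * K -> v0 * (E ^ 2 - 1) <= K ^ 2 -> s ^ 2 <= M * (E ^ 2 - 1) ->
  L2norm_omega0 v0 w0 >= 2 * sqrt PI * nu / sqrt M.
Proof.
  intros Hnu Hv Hs HM HX H1 H2. unfold L2norm_omega0.
  assert (HXe : Rabs w0 = nu * (1 + v0) * K / s) by (rewrite <- HX; field; lra).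
  assert (Hw2 : w0 ^ 2 = (nu * (1 + v0) * K / s) ^ 2) by (rewrite <- HXe, pow2_abs; reflexivity).
  pose proof PI_RGT_0 as Hpi.
  assert (Hsp : 0 < sqrt PI) by (apply sqrt_lt_R0; lra).
  assert (Hsm : 0 < sqrt M) by (apply sqrt_lt_R0; lra).
  assert (Hr : 0 <= 2 * sqrt PI * nu / sqrt M).
  { unfold Rdiv. apply Rmult_le_pos; [nra|]. left; apply Rinv_0_lt_compat; lra. }
  rewrite <- (sqrt_pow2 _ Hr). apply Rle_ge, sqrt_le_1_alt.
  replace ((2 * sqrt PI * nu / sqrt M) ^ 2) with (4 * (sqrt PI * sqrt PI) * nu ^ 2 / (sqrt M * sqrt M)) by (field; lra).
  rewrite !sqrt_sqrt by lra. rewrite Hw2.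
  replace (4 * PI * (nu * (1 + v0) * K / s) ^ 2 / (v0 * (1 + v0) ^ 2)) with
    (4 * PI * nu ^ 2 * K ^ 2 / (s ^ 2 * v0)) by (field; lra).
  assert (Hk : s ^ 2 * v0 <= M * K ^ 2) by nra.
  assert (0 < s ^ 2) by nra.
  unfold Rdiv. apply Rmult_le_reg_r with (M * (s ^ 2 * v0)). { apply Rmult_lt_0_compat; [lra| apply Rmult_lt_0_compat; lra]. }
  replace (4 * PI * nu ^ 2 * / M * (M * (s ^ 2 * v0))) with (4 * PI * nu ^ 2 * (s ^ 2 * v0)) by (field; lra).
  replace (4 * PI * nu ^ 2 * K ^ 2 * / (s ^ 2 * v0) * (M * (s ^ 2 * v0))) with (4 * PI * nu ^ 2 * (M * K ^ 2)) by (field; repeat split; lra).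
  apply Rmult_le_compat_l; nra.
Qed.

Lemma collapse_cases nu v0 w0 tc : 0 < v0 ->
  (filterlim (v_c nu v0 w0) (at_left tc) (locally 0)
     \/ filterlim (v_c nu v0 w0) (at_left tc) (Rbar_locally p_infty)) ->
  clm_den nu v0 w0 tc = 0 \/
  -1 + w0 / (1 + v0) * tc + (exp (nu * tc) + 1) / 2 * (1 + v0) = 0.
Proof.
  intros Hv Hlim. destruct (Req_dec (clm_den nu v0 w0 tc) 0) as [HD|HD]; [left; auto|right].
  set (Nn := -1 + w0 / (1 + v0) * tc + (exp (nu * tc) + 1) / 2 * (1 + v0)).
  destruct (Req_dec Nn 0) as [HN|HN]; auto. exfalso.
  assert (Hc : ex_derive (v_c nu v0 w0) tc).
  { unfold v_c. auto_derive. split; [unfold clm_den; auto_derive; auto | split; auto]. }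
  apply ex_derive_continuous in Hc.
  assert (Hl : filterlim (v_c nu v0 w0) (at_left tc) (locally (v_c nu v0 w0 tc))).
  { eapply filterlim_filter_le_1; [apply filter_le_within|exact Hc]. }
  set (L := v_c nu v0 w0 tc) in *.
  assert (HL : L <> 0).
  { unfold L, v_c. fold Nn. unfold Rdiv. apply Rmult_integral_contrapositive; split; auto.
    apply Rinv_neq_0_compat; auto. }
  assert (Hep : 0 < Rabs L / 2) by (pose proof (Rabs_pos_lt L HL); lra).
  pose proof (proj1 (filterlim_locally _ _) Hl (mkposreal _ Hep)) as H1.
  destruct (at_left_proper_filter tc) as [Hex _].
  destruct Hlim as [Hlim|Hlim].
  - pose proof (proj1 (filterlim_locally _ _) Hlim (mkposreal _ Hep)) as H2.
    destruct (Hex _ (filter_and _ _ H1 H2)) as [x [Hx1 Hx2]].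
    simpl in Hx1, Hx2. unfold ball in Hx1, Hx2; simpl in Hx1, Hx2.
    unfold AbsRing_ball, abs, minus, plus, opp in Hx1, Hx2; simpl in Hx1, Hx2.
    set (y := v_c nu v0 w0 x) in *.
    assert (Rabs L <= Rabs (y + - L) + Rabs (y + - 0)).
    { replace L with ((y + - 0) - (y + - L)) at 1 by ring.
      eapply Rle_trans; [apply Rabs_triang|]. rewrite Rabs_Ropp. lra. }
    lra.
  - assert (H2 : at_left tc (fun x => L + 1 < v_c nu v0 w0 x)).
    { apply Hlim. exists (L + 1). auto. }
    pose proof (proj1 (filterlim_locally _ _) Hl (mkposreal 1 Rlt_0_1)) as H1'.
    destruct (Hex _ (filter_and _ _ H1' H2)) as [x [Hx1 Hx2]].
    simpl in Hx1. unfold ball in Hx1; simpl in Hx1.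
    unfold AbsRing_ball, abs, minus, plus, opp in Hx1; simpl in Hx1.
    set (y := v_c nu v0 w0 x) in *.
    pose proof (Rle_abs (y + - L)). lra.
Qed.

Theorem mainTheorem15 (nu v0 w0 M : R) :
  0 < nu -> 0 < v0 -> w0 <> 0 ->
  (forall s, 0 <= s -> M_fun s <= M) ->
  (exists s, 0 <= s /\ M_fun s = M) ->
  collapses nu v0 w0 ->
  B0norm_omega0 v0 w0 >= 2 * exp 1 * nu /\
  L2norm_omega0 v0 w0 >= 2 * sqrt PI * nu / sqrt M.
Proof.
  intros Hnu Hv Hw Hmax Hex [tc [Htc [_ Hlim]]].
  destruct (key M Hmax Hex) as [HM Hkey].
  set (s := nu * tc).
  assert (Hs : 0 < s) by (unfold s; nra).
  set (E := exp s).
  assert (HE1 : 1 < E) by (unfold E; pose proof (exp_ineq1 s ltac:(lra)); lra).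
  assert (HeE : exp 1 * s <= E).
  { unfold E. replace s with (1 + (s - 1)) at 2 by ring. rewrite exp_plus.
    pose proof (exp_ineq1_le (s - 1)). pose proof (exp_pos 1).
    apply Rmult_le_compat_l; lra. }
  assert (HE2 : s ^ 2 <= M * (E ^ 2 - 1)).
  { replace (E ^ 2) with (exp (2 * s)). apply Hkey; auto.
    unfold E. replace (2 * s) with (s + s) by ring. rewrite exp_plus. ring. }
  destruct (collapse_cases nu v0 w0 tc Hv Hlim) as [HD|HN].
  - unfold clm_den in HD. fold s E in HD.
    set (K := 1 + (E - 1) / 2 * (1 + v0)).
    assert (Hq : w0 / (1 + v0) * tc = K) by (unfold K; lra).
    assert (Hwt : w0 * tc = (1 + v0) * K) by (rewrite <- Hq; field; lra).
    assert (HK : 0 < K) by (unfold K; nra).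
    assert (Hw0 : 0 < w0) by nra.
    assert (HX : Rabs w0 * s = nu * (1 + v0) * K).
    { rewrite Rabs_pos_eq by lra. unfold s. replace (nu * (1 + v0) * K) with (nu * ((1 + v0) * K)) by ring. rewrite <- Hwt. ring. }
    split.
    + apply (B0gen nu v0 w0 s E K); auto; intros; unfold K; nra.
    + apply (L2gen nu v0 w0 s E K M); auto.
      assert (Hsq : K ^ 2 - v0 * (E ^ 2 - 1) = ((1 + (E-1)/2) - v0 * ((E-1)/2)) ^ 2) by (unfold K; field).
      pose proof (pow2_ge_0 ((1 + (E-1)/2) - v0 * ((E-1)/2))). lra.
  - fold s E in HN.
    set (K := (E + 1) / 2 * (1 + v0) - 1).
    assert (Hq : w0 / (1 + v0) * tc = - K) by (unfold K; lra).
    assert (Hwt : w0 * tc = - ((1 + v0) * K)) by (replace (-((1+v0)*K)) with ((1+v0)*(-K)) by ring; rewrite <- Hq; field; lra).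
    assert (HK : 0 < K) by (unfold K; nra).
    assert (Hw0 : w0 < 0) by nra.
    assert (HX : Rabs w0 * s = nu * (1 + v0) * K).
    { rewrite Rabs_left by lra. unfold s. replace (- w0 * (nu * tc)) with (- (w0 * tc) * nu) by ring.
      rewrite Hwt. ring. }
    split.
    + apply (B0gen nu v0 w0 s E K); auto; intros; unfold K; nra.
    + apply (L2gen nu v0 w0 s E K M); auto.
      assert (Hsq : K ^ 2 - v0 * (E ^ 2 - 1) = ((E-1)/2 - v0 * (1 + (E-1)/2)) ^ 2) by (unfold K; field).
      pose proof (pow2_ge_0 ((E-1)/2 - v0 * (1 + (E-1)/2))). lra.
Qed.
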